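(* Let $k>1$, let $f$ be a positive function, differentiable on $[0,1]$, and define $g(R)=\dfrac{k-1}{\frac{k-1}{k}-R}$ for $R\neq \frac{k-1}{k}$. Consider the planar system $$\frac{dI}{d\tau}=I\,[f(R)(1-I-R)-k],\qquad \frac{dR}{d\tau}=(k-1)I-R.$$ A point $(I^*,R^* )$ is an endemic equilibrium of this system if and only if $R^*\in\left(0,\frac{k-1}{k}\right)$, $I^*\in\left(0,\frac1k\right)$, $I^*=\frac{1}{k-1}R^*$, and $f(R^* )=g(R^* )$.
   Context: An endemic equilibrium is an equilibrium point $(I^*,R^* )$ of the system with $I^*>0$. *)

(* Defs.v *)
From Stdlib Require Import Reals.
From Coquelicot Require Import Coquelicot.
Open Scope R_scope.

Definition rhs_I (f : R -> R) (k I Rr : R) : R := I * (f Rr * (1 - I - Rr) - k).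
Definition rhs_R (k I Rr : R) : R := (k - 1) * I - Rr.

Definition g (k Rr : R) : R := (k - 1) / ((k - 1) / k - Rr).

(* Equilibrium point of the system; the state space is restricted to
   R in [0,1], the domain on which f is given. *)
Definition equilibrium (f : R -> R) (k I Rr : R) : Prop :=
  0 <= Rr <= 1 /\ rhs_I f k I Rr = 0 /\ rhs_R k I Rr = 0.

Definition endemic_equilibrium (f : R -> R) (k I Rr : R) : Prop :=
  equilibrium f k I Rr /\ 0 < I.

(* Main.v *)
Require Import Defs.
From Stdlib Require Import Reals Lra Psatz.
From Coquelicot Require Import Coquelicot.
Open Scope R_scope.

Theorem theorem1 (k : R) (f : R -> R)
  (hk : 1 < k)
  (hpos : forall x, 0 <= x <= 1 -> 0 < f x)
  (hdiff : forall x, 0 <= x <= 1 -> ex_derive f x)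
  (Is Rs : R) :
  endemic_equilibrium f k Is Rs <->
  (0 < Rs < (k - 1) / k /\ 0 < Is < 1 / k /\ Is = 1 / (k - 1) * Rs /\
   f Rs = g k Rs).
Proof.
  unfold endemic_equilibrium, equilibrium, rhs_I, rhs_R, g.
  assert (hk1 : k - 1 <> 0) by lra.
  assert (hk0 : k <> 0) by lra.
  split.
  - intros [[HR [H1 H2]] HI].
    assert (HIs : Is = Rs / (k - 1)) by (field_simplify_eq; lra).
    assert (Hf := hpos Rs HR).
    assert (Hq : f Rs * (1 - Is - Rs) - k = 0).
    { destruct (Rmult_integral _ _ H1); [lra|assumption]. }
    assert (Hp : 0 < 1 - Is - Rs) by nra.
    assert (HRp : 0 < Rs) by nra.
    assert (Hd : 0 < (k - 1) / k - Rs).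
    { assert (1 - Is - Rs = k / (k - 1) * ((k - 1) / k - Rs)) by (rewrite HIs; field; lra).
      assert (0 < k / (k-1)) by (apply Rdiv_lt_0_compat; lra).
      nra. }
    split; [lra|]. split.
    { split; [assumption|]. rewrite HIs.
      apply (Rmult_lt_reg_r (k - 1)); [lra|].
      replace (Rs / (k - 1) * (k - 1)) with Rs by (field; lra).
      replace (1 / k * (k - 1)) with ((k-1)/k) by (field; lra). lra. }
    split; [rewrite HIs; field; lra|].
    assert (Hfe : f Rs = k / (1 - Is - Rs)) by (field_simplify_eq; lra).
    rewrite Hfe, HIs. field. assert (E0: k*((k-1)/k-Rs) = k-1-Rs*k) by (field; lra). assert (0 < k*((k-1)/k-Rs)) by (apply Rmult_lt_0_compat; lra). repeat split; lra.
  - intros [[HR1 HR2] [[HI1 HI2] [HIs Hf]]].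
    assert (Hkk : (k - 1) / k < 1).
    { apply (Rmult_lt_reg_r k); [lra|].
      replace ((k - 1) / k * k) with (k - 1) by (field; lra). lra. }
    split; [|assumption]. split; [lra|]. split.
    + rewrite Hf, HIs.
      assert (E0: k*((k-1)/k-Rs) = k-1-Rs*k) by (field; lra).
      assert (0 < k*((k-1)/k-Rs)) by (apply Rmult_lt_0_compat; lra).
      field_simplify_eq; [reflexivity|repeat split; lra].
    + rewrite HIs. field. lra.
Qed.
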